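(* Let $s=(s_1,\dots,s_m)$ be a sequence of positive integers and let $\alpha$ be a pattern whose largest value $k$ is internal (no copy of $k$ is the first or last letter of $\alpha$) and isolated (no two copies of $k$ are consecutive letters of $\alpha$). Then $\mathrm{Av}_s(\alpha)$ is a zig-zag language.
   Context: For a sequence $s=(s_1,\dots,s_m)$ of positive integers, an $s$-word is a word with exactly $s_i$ copies of $i$ for each $i\in[m]$; $S_s$ is the set of $s$-words. A pattern is a word $\alpha=\alpha_1\cdots\alpha_\ell$ over $[k]$ using every value of $[k]$. A word $w$ contains $\alpha$ if there are indices $i_1<\dots<i_\ell$ such that for all $a,b$: $w_{i_a}<w_{i_b}$ iff $\alpha_a<\alpha_b$, and $w_{i_a}=w_{i_b}$ iff $\alpha_a=\alpha_b$; otherwise $w$ avoids $\alpha$. $\mathrm{Av}_s(\alpha)$ is the set of $s$-words avoiding $\alpha$. Parent operation: $p(s)=(s_1,\dots,s_{m-1},s_m-1)$ if $s_m>1$ and $p(s)=(s_1,\dots,s_{m-1})$ if $s_m=1$; for an $s$-word $w$, $p(w)$ deletes the rightmost copy of $m$; $p(L)=\{p(w):w\in L\}$. Zig-zag language (recursive on $n=\sum s_i$): for the empty sequence the only zig-zag language is $\{\varepsilon\}$. For $n\ge1$, $L\subseteq S_s$ is zig-zag if $p(L)$ is a zig-zag language of $p(s)$-words and for every $w'\in p(L)$ both of the following lie in $L$: (a) $w'm$, and (b) $mw'$ if $s_m=1$, or, if $s_m>1$, the word obtained by inserting $m$ immediately next to the rightmost $m$ of $w'$. *)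

(* Defs.v *)
(* Words and sequences are [seq nat]; letters are 1-based. *)
From mathcomp Require Import all_boot.
Set Implicit Arguments. Unset Strict Implicit. Unset Printing Implicit Defensive.

Definition sword (s w : seq nat) : Prop :=
  all (fun x => (0 < x) && (x <= size s)) w /\
  forall i, i < size s -> count_mem i.+1 w = nth 0 s i.

Definition pmax (alpha : seq nat) : nat := \max_(a <- alpha) a.

Definition is_pattern (alpha : seq nat) : Prop :=
  0 < pmax alpha /\
  all (fun a => 0 < a) alpha /\
  (forall v, 0 < v <= pmax alpha -> v \in alpha).

Definition order_iso (u alpha : seq nat) : Prop :=
  size u = size alpha /\
  forall a b, a < size alpha -> b < size alpha ->
    ((nth 0 u a < nth 0 u b) = (nth 0 alpha a < nth 0 alpha b)) /\
    ((nth 0 u a == nth 0 u b) = (nth 0 alpha a == nth 0 alpha b)).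

Definition contains (w alpha : seq nat) : Prop :=
  exists m : bitseq, size m = size w /\ order_iso (mask m w) alpha.

Definition Av (s alpha : seq nat) (w : seq nat) : Prop :=
  sword s w /\ ~ contains w alpha.

Definition max_internal (alpha : seq nat) : Prop :=
  forall i, i < size alpha -> nth 0 alpha i = pmax alpha ->
    0 < i /\ i.+1 < size alpha.

Definition max_isolated (alpha : seq nat) : Prop :=
  forall i, i.+1 < size alpha ->
    ~ (nth 0 alpha i = pmax alpha /\ nth 0 alpha i.+1 = pmax alpha).

Definition pseq (s : seq nat) : seq nat :=
  let m := size s in
  if 1 < nth 0 s m.-1 then rcons (take m.-1 s) (nth 0 s m.-1).-1
  else take m.-1 s.

Definition del_last (m : nat) (w : seq nat) : seq nat := rev (rem m (rev w)).

(* insert m immediately next to the rightmost copy of m in w *)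
Definition ins_next_last (m : nat) (w : seq nat) : seq nat :=
  let r := rev w in let i := index m r in rev (take i r ++ m :: drop i r).

Definition lang := seq nat -> Prop.

Definition plang (m : nat) (L : lang) : lang :=
  fun w' => exists w, L w /\ del_last m w = w'.

Fixpoint zigzag_n (n : nat) (s : seq nat) (L : lang) : Prop :=
  match n with
  | 0 => s = [::] /\ (forall w, L w <-> w = [::])
  | n'.+1 =>
      let m := size s in
      (forall w, L w -> sword s w) /\
      zigzag_n n' (pseq s) (plang m L) /\
      (forall w', plang m L w' ->
          L (rcons w' m) /\
          L (if nth 0 s m.-1 == 1 then m :: w' else ins_next_last m w'))
  end.

Definition zigzag (s : seq nat) (L : lang) : Prop := zigzag_n (sumn s) s L.

(* Main.v *)
Require Import Defs.
From mathcomp Require Import all_boot zify.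

Lemma containsP w a : contains w a <-> exists u, subseq u w /\ order_iso u a.
Proof.
split.
  by case=> bm [_ H]; exists (mask bm w); split=> //; apply: mask_subseq.
case=> u [/subseqP [bm Hs ->] H]; by exists bm.
Qed.

Lemma contains_sub w1 w2 a : subseq w1 w2 -> contains w1 a -> contains w2 a.
Proof.
move=> S /containsP [u [Su H]]; apply/containsP; exists u; split=> //.
exact: subseq_trans Su S.
Qed.

Lemma subseq_cc (y x : nat) u w :
  subseq (y :: u) (x :: w) = if y == x then subseq u w else subseq (y :: u) w.
Proof. by rewrite /=; case: ifP. Qed.

Lemma subseq_split (x : nat) w1 w2 u : subseq u (w1 ++ x :: w2) ->
  subseq u (w1 ++ w2) \/
  exists u1 u2, u = u1 ++ x :: u2 /\ subseq u1 w1 /\ subseq u2 w2.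
Proof.
elim: w1 u => [|a w1 IH] [|y u]; try by left; rewrite sub0seq.
  rewrite cat0s subseq_cc; case: (y =P x) => [->|_] H.
    by right; exists [::], u.
  by left.
rewrite cat_cons subseq_cc; case: (y =P a) => [->|ne] H.
  case: (IH _ H) => [L|[u1 [u2 [-> [S1 S2]]]]].
    by left; rewrite cat_cons subseq_cc eqxx.
  by right; exists (a :: u1), u2; rewrite subseq_cc eqxx.
case: (IH _ H) => [L|[u1 [u2 [E [S1 S2]]]]].
  by left; rewrite cat_cons subseq_cc; case: (y =P a).
right; exists u1, u2; split=> //; split=> //.
exact: subseq_trans S1 (subseq_cons _ _).
Qed.

Lemma le_pmax l a : a \in l -> a <= \max_(b <- l) b.
Proof.
elim: l => //= b l IH; rewrite in_cons big_cons; case/orP=> [/eqP->|H].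
  exact: leq_maxl.
exact: leq_trans (IH H) (leq_maxr _ _).
Qed.

Lemma pmax_le l B : (forall a, a \in l -> a <= B) -> \max_(b <- l) b <= B.
Proof.
elim: l => [|b l IH] H; first by rewrite big_nil.
rewrite big_cons geq_max H ?mem_head //=; apply: IH => a Ha.
by apply: H; rewrite in_cons Ha orbT.
Qed.

Lemma etrans_lt {i} {u a : seq nat} : i < size u -> size u = size a -> i < size a.
Proof. by move=> ? <-. Qed.

Lemma key {u a m i} : order_iso u a -> (forall x, x \in u -> x <= m) ->
  i < size u -> nth 0 u i = m -> nth 0 a i = pmax a.
Proof.
move=> [Hsz H] Hm Hi Hui.
have Hj : forall j, j < size a -> nth 0 a j <= nth 0 a i.
  move=> j Hj; have [H1 _] := H i j (etrans_lt Hi Hsz) Hj.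
  rewrite leqNgt -H1 -leqNgt Hui; apply: Hm; apply: mem_nth; by rewrite Hsz.
apply/eqP; rewrite eqn_leq le_pmax ?mem_nth -?Hsz //=.
apply: pmax_le => b Hb; rewrite -(nth_index 0 Hb); apply: Hj.
by rewrite index_mem.
Qed.

Lemma bnd_sub {u w : seq nat} {m} : subseq u w -> (forall x, x \in w -> x <= m) ->
  forall x, x \in u -> x <= m.
Proof. by move=> S H x Hx; apply: H; apply: (mem_subseq S). Qed.

Lemma avoid_rcons a w' m : ~ contains w' a ->
  (forall x, x \in rcons w' m -> x <= m) -> max_internal a ->
  ~ contains (rcons w' m) a.
Proof.
move=> Av Hb Hint /containsP [u [Su Hu]].
have Hbu := bnd_sub Su Hb.
move: Su; rewrite -cats1 => /subseq_split [L|[u1 [u2 [E [S1 S2]]]]].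
  by apply: Av; apply/containsP; exists u; rewrite cats0 in L.
move: S2; rewrite subseq0 => /eqP E2; subst u u2.
have Hs : size u1 < size (u1 ++ [:: m]) by rewrite size_cat /= addn1.
have Hn : nth 0 (u1 ++ [:: m]) (size u1) = m by rewrite nth_cat ltnn subnn.
have K := key Hu Hbu Hs Hn.
case: Hu => Hsz _.
have [_ ] := Hint (size u1) (etrans_lt Hs Hsz) K.
by rewrite -Hsz size_cat /= addn1 ltnn.
Qed.

Lemma avoid_cons a w' m : ~ contains w' a ->
  (forall x, x \in m :: w' -> x <= m) -> max_internal a ->
  ~ contains (m :: w') a.
Proof.
move=> Av Hb Hint /containsP [u [Su Hu]].
have Hbu := bnd_sub Su Hb.
move: Su; rewrite -[m :: w']cat0s => /subseq_split [L|[u1 [u2 [E [S1 S2]]]]].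
  by apply: Av; apply/containsP; exists u.
move: S1; rewrite subseq0 => /eqP E1; subst u u1.
have Hs : 0 < size ([::] ++ m :: u2) by [].
have K := key Hu Hbu Hs erefl.
case: Hu => Hsz _.
by have [] := Hint 0 (etrans_lt Hs Hsz) K.
Qed.

Lemma avoid_dbl a p q m : ~ contains (p ++ m :: q) a ->
  (forall x, x \in p ++ m :: m :: q -> x <= m) -> max_isolated a ->
  ~ contains (p ++ m :: m :: q) a.
Proof.
move=> Av Hb Hiso /containsP [u [Su Hu]].
have Hbu := bnd_sub Su Hb.
move: Su => /subseq_split [L|[u1 [u2 [E [S1 S2]]]]].
  by apply: Av; apply/containsP; exists u.
move: S2; rewrite -[m :: q]cat0s => /subseq_split [L|[v1 [v2 [E2 [T1 T2]]]]].
  apply: Av; apply/containsP; exists u; split=> //.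
  by rewrite E; apply: cat_subseq => //; rewrite subseq_cc eqxx.
move: T1; rewrite subseq0 => /eqP E1; subst u u2 v1.
have Hs : (size u1).+1 < size (u1 ++ m :: ([::] ++ m :: v2))
  by rewrite size_cat /=; lia.
have Hs' : size u1 < size (u1 ++ m :: ([::] ++ m :: v2)) by exact: ltnW.
have Hn1 : nth 0 (u1 ++ m :: ([::] ++ m :: v2)) (size u1) = m by rewrite nth_cat ltnn subnn.
have K1 := key Hu Hbu Hs' Hn1.
have Hn2 : nth 0 (u1 ++ m :: ([::] ++ m :: v2)) (size u1).+1 = m by rewrite nth_cat ltnNge leqnSn /= subSn // subnn.
have K2 := key Hu Hbu Hs Hn2.
case: Hu => Hsz _.
by apply: (Hiso (size u1) (etrans_lt Hs Hsz)).
Qed.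

Lemma pseq_rcons s0 c : pseq (rcons s0 c) = if 1 < c then rcons s0 c.-1 else s0.
Proof.
rewrite /pseq size_rcons /= nth_rcons ltnn eqxx.
by rewrite -[rcons s0 c]cats1 (take_size_cat _ erefl).
Qed.

Lemma sword_perm s w1 w2 : perm_eq w1 w2 -> sword s w1 -> sword s w2.
Proof.
move=> P [H1 H2]; split; first by rewrite -(perm_all _ P).
by move=> i Hi; rewrite -(permP P) H2.
Qed.

Lemma count_rc (x m : nat) w : count_mem x (rcons w m) = count_mem x w + (m == x).
Proof. by rewrite -cats1 count_cat /= addn0. Qed.

Lemma sword_rcons s0 c w' : 0 < c -> sword (pseq (rcons s0 c)) w' ->
  sword (rcons s0 c) (rcons w' (size s0).+1).
Proof.
rewrite pseq_rcons => Hc [H1 H2]; split.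
  rewrite all_rcons size_rcons leqnn /=.
  apply/allP => x Hx; move/allP: H1 => /(_ x Hx) /andP [-> /=].
  by case: ifP; rewrite ?size_rcons; lia.
rewrite size_rcons => i Hi; rewrite count_rc nth_rcons.
case: ltnP => Hi2.
  have -> : ((size s0).+1 == i.+1) = false by apply/eqP; lia.
  rewrite addn0; have := H2 i; case: ifP => _; rewrite ?size_rcons ?nth_rcons ?Hi2.
    by move=> ->; lia.
  by move=> ->.
have Ei : i = size s0 by lia.
subst i; rewrite eqxx; move: H2 H1; case: ifP => Hc1.
  by move=> /(_ (size s0)); rewrite size_rcons nth_rcons ltnn eqxx => -> //; lia.
move=> _ H1.
have -> : count_mem (size s0).+1 w' = 0.
  apply/count_memPn/negP => Hin; move/allP: H1 => /(_ _ Hin); lia.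
by rewrite eqxx; lia.
Qed.

Lemma del_perm {m : nat} {w} : m \in w -> perm_eq w (m :: del_last m w).
Proof.
move=> Hm; rewrite /del_last.
have Hr : m \in rev w by rewrite mem_rev.
rewrite -(perm_rev w) (perm_trans (perm_to_rem Hr)) // perm_cons.
by rewrite perm_sym perm_rev.
Qed.

Lemma sword_del s0 c w : 0 < c -> sword (rcons s0 c) w ->
  sword (pseq (rcons s0 c)) (del_last (size s0).+1 w).
Proof.
move=> Hc [H1 H2].
set m := (size s0).+1.
have Cm : count_mem m w = c.
  by have := H2 (size s0); rewrite size_rcons nth_rcons ltnn eqxx => ->.
have Hm : m \in w by rewrite -has_pred1 has_count; change (0 < count_mem m w); lia.
have P := del_perm Hm.
have Cd : forall x, count_mem x w = (m == x) + count_mem x (del_last m w).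
  by move=> x; rewrite (permP P).
have Md : forall x, x \in del_last m w -> x \in w.
  by move=> x Hx; rewrite (perm_mem P) in_cons Hx orbT.
rewrite pseq_rcons; case: ifP => Hc1; split.
- apply/allP => x /Md Hx; move/allP: H1 => /(_ _ Hx).
  by rewrite !size_rcons.
- rewrite size_rcons => i Hi; have := Cd i.+1; have := H2 i.
  rewrite size_rcons nth_rcons Hi => /(_ isT) E1 E2.
  have Hmi : (m == i.+1) = (i == size s0) by rewrite /m eqSS eq_sym.
  rewrite Hmi in E2; rewrite nth_rcons.
  case: (ltnP i (size s0)) Hi E1 E2 => Hi2 Hi E1 E2.
    by rewrite (ltn_eqF Hi2) in E2; lia.
  have Ei : i = size s0 by lia.
  by subst i; rewrite eqxx in E1 E2 *; lia.
- apply/allP => x Hx; have Hw := Md _ Hx; move/allP: H1 => /(_ _ Hw).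
  rewrite size_rcons => /andP [-> /=] Hle.
  have : count_mem m (del_last m w) = 0 by have := Cd m; rewrite eqxx Cm; lia.
  have Z : count_mem m (del_last m w) = 0.
    by have := Cd m; rewrite eqxx Cm /= => E; lia.
  have Hn : m \notin del_last m w by apply/count_memPn.
  have Hxm : x != m by apply/eqP => E; move: Hn; rewrite -{1}E Hx.
  move: Hxm Hle; rewrite /m; lia.
- move=> i Hi; have := Cd i.+1; have := H2 i.
  rewrite size_rcons nth_rcons ltnS ltnW // Hi => /(_ isT) E1 E2.
  have Hmi : (m == i.+1) = false by rewrite /m eqSS; apply/eqP; lia.
  by rewrite Hmi in E2; lia.
Qed.

Lemma ins_struct {m : nat} {w} : m \in w ->
  exists p q, w = p ++ m :: q /\ ins_next_last m w = p ++ m :: m :: q.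
Proof.
move=> Hm; rewrite /ins_next_last.
set r := rev w; set i := index m r.
have Hi : i < size r by rewrite index_mem mem_rev.
have Hd : drop i r = m :: drop i.+1 r.
  by rewrite (drop_nth 0 Hi) nth_index // mem_rev.
exists (rev (drop i.+1 r)), (rev (take i r)); split.
  by rewrite -{1}[w]revK -/r -{1}(cat_take_drop i r) Hd rev_cat rev_cons cat_rcons.
by rewrite Hd rev_cat !rev_cons -!cats1 -!catA.
Qed.

Lemma zz_ext n s (L L' : lang) : (forall w, L w <-> L' w) ->
  zigzag_n n s L -> zigzag_n n s L'.
Proof.
elim: n s L L' => [|n IH] s L L' E /=.
  by case=> Hs HL; split=> // w; apply: iff_trans (iff_sym (E w)) (HL w).
case=> H1 [H2 H3]; split; first by move=> w /E /H1.
have Ep : forall w, plang (size s) L w <-> plang (size s) L' w.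
  by move=> w; split; case=> v [Hv Hd]; exists v; split=> //; apply/E.
split; first exact: IH Ep H2.
by move=> w' /Ep /H3 [A B]; split; apply/E.
Qed.

Lemma sword_bnd {s w} : sword s w -> forall x, x \in w -> x <= size s.
Proof. by case=> /allP H _ x /H /andP []. Qed.

Lemma del_rcons (m : nat) w : del_last m (rcons w m) = w.
Proof. by rewrite /del_last rev_rcons /= eqxx revK. Qed.

Lemma del_sub (m : nat) w : subseq (del_last m w) w.
Proof. by rewrite /del_last -subseq_rev revK rem_subseq. Qed.

Lemma step {s0 c a w'} : 0 < c -> max_internal a -> max_isolated a ->
  Av (pseq (rcons s0 c)) a w' ->
  Av (rcons s0 c) a (rcons w' (size s0).+1) /\
  Av (rcons s0 c) a (if c == 1 then (size s0).+1 :: w'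
                     else ins_next_last (size s0).+1 w').
Proof.
move=> Hc Hint Hiso [Sw Aw].
set m := (size s0).+1.
have Sr : sword (rcons s0 c) (rcons w' m) by exact: sword_rcons.
have Bd : forall W, sword (rcons s0 c) W -> forall x, x \in W -> x <= m.
  by move=> W HW x Hx; have := sword_bnd HW x Hx; rewrite size_rcons.
split.
  by split=> //; apply: avoid_rcons => //; apply: Bd.
case: eqP => Hc1.
  have Sc : sword (rcons s0 c) (m :: w').
    by apply: sword_perm Sr; rewrite perm_rcons.
  by split=> //; apply: avoid_cons => //; apply: Bd.
have Hm : m \in w'.
  case: Sw => _ /(_ (size s0)); rewrite pseq_rcons.
  have -> : 1 < c by lia.
  rewrite size_rcons nth_rcons ltnn eqxx => /(_ (ltnSn _)) E.
  by rewrite -has_pred1 has_count; change (0 < count_mem m w'); rewrite /m E; lia.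
have [p [q [Ew Ei]]] := ins_struct Hm.
rewrite Ei; subst w'.
have Sc : sword (rcons s0 c) (p ++ m :: m :: q).
  apply: sword_perm Sr; rewrite perm_rcons.
  by rewrite perm_sym -[m :: m :: q]cat1s perm_catCA.
by split=> //; apply: avoid_dbl => //; apply: Bd.
Qed.

Lemma plangAv s0 c a : 0 < c -> max_internal a -> max_isolated a ->
  forall w', plang (size (rcons s0 c)) (Av (rcons s0 c) a) w' <->
             Av (pseq (rcons s0 c)) a w'.
Proof.
move=> Hc Hint Hiso w'; rewrite size_rcons; split.
  case=> w [[Sw Aw] <-]; split; first exact: sword_del.
  by move=> C; apply: Aw; apply: contains_sub (del_sub _ _) C.
move=> H; exists (rcons w' (size s0).+1); split; last exact: del_rcons.
by case: (step Hc Hint Hiso H).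
Qed.

Theorem mainTheorem4 (s alpha : seq nat) :
  all (fun x => 0 < x) s ->
  is_pattern alpha -> max_internal alpha -> max_isolated alpha ->
  zigzag s (Av s alpha).
Proof.
move=> Hs [Hp _] Hint Hiso; rewrite /zigzag.
suff : forall n s, all (fun x => 0 < x) s -> sumn s = n -> zigzag_n n s (Av s alpha).
  by apply.
clear Hs; elim=> [|n IH] {}s.
  case: s => [|x s] /=; last by move=> /andP [Hx _]; lia.
  move=> _ _; split=> // w; split.
    by case=> [[H1 _] _]; case: w H1 => // x w /= /andP [/andP [Hx Hx']]; lia.
  move=> ->; split; first by split=> // i.
  case=> bm [_ [Hsz _]]; move: Hsz; rewrite (_ : mask bm [::] = [::]); last by case: bm.
  move=> /esym /size0nil E; move: Hp; rewrite /pmax E big_nil //.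
case/lastP: s => [|s0 c] //.
rewrite all_rcons -cats1 sumn_cat /= addn0 cats1 => /andP [Hc Hs0] Hsum.
split; first by move=> w [].
split.
  apply: (@zz_ext _ _ (Av (pseq (rcons s0 c)) alpha)).
    by move=> w; apply: iff_sym; apply: plangAv.
  have Hpos : all (fun x => 0 < x) (pseq (rcons s0 c)).
    by rewrite pseq_rcons; case: ifP => H //; rewrite all_rcons Hs0 andbT; lia.
  have Hsm : sumn (pseq (rcons s0 c)) = n.
    rewrite pseq_rcons; case: ifP => H.
      by rewrite -cats1 sumn_cat /=; lia.
    have Ec : c = 1 by lia.
    by subst c; lia.
  exact: IH.
move=> w' /(plangAv _ _ _ Hc Hint Hiso) Hw.
rewrite size_rcons nth_rcons ltnn eqxx.
exact: step Hc Hint Hiso Hw.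
Qed.
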